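(* Let $C$ be a Reedy category and $D$ a category. Suppose a functor $F\colon\mathrm{Down}_*(C)\to D$ sends every $\mathrm{last}$-weak equivalence to an isomorphism. Then there exist a functor $\tilde F\colon C\to D$ and a natural isomorphism $\tilde F\circ\mathrm{last}\cong F$.
   Context: A Reedy category $(C,C_-,C_+)$: wide subcategories with unique factorization of every morphism as ($C_-$ then $C_+$), every morphism of $C_\pm$ decidably identity or not, and the relation ($x<'y$ iff non-identity $x\to y$ in $C_+$ or non-identity $y\to x$ in $C_-$) well-founded. $\Delta$: finite ordinals $[n]$ and order-preserving maps. $\int N^{-,+}(C)$: objects $([n],X)$ with $X\colon[n]\to C$ a functor sending all morphisms into $C_-$; morphisms $([m],X)\to([n],Y)$ are $(\alpha,\theta)$ with $\alpha\colon[m]\to[n]$ in $\Delta$ and $\theta\colon X\Rightarrow Y\circ\alpha$ with all components in $C_+$; composition $(\beta,\varphi)\circ(\alpha,\theta)=(\beta\alpha,(\varphi\alpha)\circ\theta)$. Order on hom-sets: $(\alpha,\theta)\le(\alpha',\theta')$ iff $\alpha\le\alpha'$ pointwise and $\theta'_i=Y(\alpha(i)\le\alpha'(i))\circ\theta_i$. $\mathrm{Down}_*(C)$: same objects, hom-sets quotiented by the equivalence relation generated by $\le$. $\mathrm{last}\colon\mathrm{Down}_*(C)\to C$ is induced by $\mathrm{last}([n],X)=X(n)$, $\mathrm{last}(\alpha,\theta)=Y(\alpha(m)\le n)\circ\theta_m$. A $\mathrm{last}$-weak equivalence is a morphism sent by $\mathrm{last}$ to an identity. *)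

(* Defs.v *)
From mathcomp Require Import all_boot.
From Stdlib Require Import Relations.

Set Implicit Arguments.
Unset Strict Implicit.
Unset Printing Implicit Defensive.

(* hcomp g f = g o f.                                                    *)
Record Category := {
  ob : Type;
  hom : ob -> ob -> Type;
  idm : forall a, hom a a;
  hcomp : forall a b c, hom b c -> hom a b -> hom a c;
  comp_id_l : forall a b (f : hom a b), hcomp (idm b) f = f;
  comp_id_r : forall a b (f : hom a b), hcomp f (idm a) = f;
  comp_assoc : forall a b c d (f : hom a b) (g : hom b c) (h : hom c d),
      hcomp h (hcomp g f) = hcomp (hcomp h g) f
}.
Arguments hom {_} a b.
Arguments idm {_} a.
Arguments hcomp {_ a b c} g f.

Record Functor (C D : Category) := {
  fob : ob C -> ob D;
  fhom : forall a b, hom a b -> hom (fob a) (fob b);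
  fhom_id : forall a, fhom (idm a) = idm (fob a);
  fhom_comp : forall a b c (g : hom b c) (f : hom a b),
      fhom (hcomp g f) = hcomp (fhom g) (fhom f)
}.
Arguments fob {C D} _ a.
Arguments fhom {C D} _ {a b} f.

Definition is_id (C : Category) (a b : ob C) (f : hom a b) : Prop :=
  exists e : a = b, eq_rect a (fun z => hom a z) (idm a) b e = f.

Definition is_iso (C : Category) (a b : ob C) (f : hom a b) : Prop :=
  exists g : hom b a, hcomp g f = idm a /\ hcomp f g = idm b.

Record Reedy (C : Category) := {
  Rm : forall a b : ob C, hom a b -> Prop;
  Rp : forall a b : ob C, hom a b -> Prop;
  Rm_id : forall a, Rm (idm a);
  Rp_id : forall a, Rp (idm a);
  Rm_comp : forall a b c (g : hom b c) (f : hom a b),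
      Rm f -> Rm g -> Rm (hcomp g f);
  Rp_comp : forall a b c (g : hom b c) (f : hom a b),
      Rp f -> Rp g -> Rp (hcomp g f);
  R_fact : forall a b (f : hom a b),
      exists z (g : hom a z) (h : hom z b), Rm g /\ Rp h /\ hcomp h g = f;
  R_fact_uniq : forall a b (f : hom a b) z (g : hom a z) (h : hom z b)
      z' (g' : hom a z') (h' : hom z' b),
      Rm g -> Rp h -> hcomp h g = f ->
      Rm g' -> Rp h' -> hcomp h' g' = f ->
      existT (fun w => (hom a w * hom w b)%type) z (g, h)
      = existT (fun w => (hom a w * hom w b)%type) z' (g', h');
  Rm_dec : forall a b (f : hom a b), Rm f -> is_id f \/ ~ is_id f;
  Rp_dec : forall a b (f : hom a b), Rp f -> is_id f \/ ~ is_id f;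
  R_wf : well_founded (fun x y : ob C =>
      (exists f : hom x y, Rp f /\ ~ is_id f) \/
      (exists f : hom y x, Rm f /\ ~ is_id f))
}.
Arguments Rm {C} _ {a b} f.
Arguments Rp {C} _ {a b} f.

(* Delta: [n] = {0,...,n} is 'I_n.+1; order-preserving maps.            *)
Record Dmap (m n : nat) := {
  dfun :> 'I_m.+1 -> 'I_n.+1;
  dmono : forall i j : 'I_m.+1, i <= j -> dfun i <= dfun j
}.
Arguments dmono {m n} d {i j} h.

Definition did (n : nat) : Dmap n n :=
  {| dfun := fun i => i; dmono := fun i j h => h |}.

Definition dcomp (m n p : nat) (b : Dmap n p) (a : Dmap m n) : Dmap m p :=
  {| dfun := fun i => b (a i); dmono := fun i j h => dmono b (dmono a h) |}.

Section Down.
Variables (C : Category) (R : Reedy C).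

(* Objects of int N^{-,+}(C) (and of Down_*(C)): ([n], X) with
   X : [n] -> C a functor sending every morphism into C_-. *)
Record NOb := {
  len : nat;
  Xo : 'I_len.+1 -> ob C;
  Xm : forall i j : 'I_len.+1, i <= j -> hom (Xo i) (Xo j);
  Xm_id : forall (i : 'I_len.+1) (h : i <= i), Xm h = idm (Xo i);
  Xm_comp : forall i j k : 'I_len.+1, forall (h1 : i <= j) (h2 : j <= k) (h3 : i <= k),
      Xm h3 = hcomp (Xm h2) (Xm h1);
  Xm_minus : forall (i j : 'I_len.+1) (h : i <= j), Rm R (Xm h)
}.
Arguments Xm n {i j} h.
Arguments Xo : clear implicits.

Record NHom (x y : NOb) := {
  alpha : Dmap (len x) (len y);
  theta : forall i, hom (Xo x i) (Xo y (alpha i));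
  theta_plus : forall i, Rp R (theta i);
  theta_nat : forall (i j : 'I_(len x).+1) (h : i <= j),
      hcomp (theta j) (Xm x h) = hcomp (Xm y (dmono alpha h)) (theta i)
}.

Lemma Nid_nat (x : NOb) (i j : 'I_(len x).+1) (h : i <= j) :
  hcomp (idm (Xo x j)) (Xm x h) = hcomp (Xm x (dmono (did (len x)) h)) (idm (Xo x i)).
Proof. by rewrite comp_id_l comp_id_r. Qed.

Definition Nid (x : NOb) : NHom x x :=
  {| alpha := did (len x);
     theta := fun i => idm (Xo x i);
     theta_plus := fun i => Rp_id R (Xo x i);
     theta_nat := @Nid_nat x |}.

Section Comp.
Variables (x y z : NOb) (g : NHom y z) (f : NHom x y).

Definition Ncomp_theta (i : 'I_(len x).+1) :
  hom (Xo x i) (Xo z (dcomp (alpha g) (alpha f) i)) :=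
  hcomp (theta g (alpha f i)) (theta f i).

Lemma Ncomp_plus i : Rp R (Ncomp_theta i).
Proof. by apply: Rp_comp; [apply: theta_plus | apply: theta_plus]. Qed.

Lemma Ncomp_nat (i j : 'I_(len x).+1) (h : i <= j) :
  hcomp (Ncomp_theta j) (Xm x h) =
  hcomp (Xm z (dmono (dcomp (alpha g) (alpha f)) h)) (Ncomp_theta i).
Proof.
rewrite /Ncomp_theta -comp_assoc theta_nat comp_assoc theta_nat.
by rewrite -comp_assoc.
Qed.

Definition Ncomp : NHom x z :=
  {| alpha := dcomp (alpha g) (alpha f);
     theta := Ncomp_theta;
     theta_plus := Ncomp_plus;
     theta_nat := Ncomp_nat |}.
End Comp.

Definition Nle (x y : NOb) (f f' : NHom x y) : Prop :=
  exists H : forall i, alpha f i <= alpha f' i,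
    forall i, theta f' i = hcomp (Xm y (H i)) (theta f i).

(* Hom-sets of Down_*(C): NHom x y quotiented by the equivalence
   relation generated by Nle. *)
Definition Down_equiv (x y : NOb) : relation (NHom x y) :=
  clos_refl_sym_trans (NHom x y) (@Nle x y).

Definition lastD (x : NOb) : ob C := Xo x ord_max.

Definition lastD_hom (x y : NOb) (f : NHom x y) : hom (lastD x) (lastD y) :=
  hcomp (Xm y (leq_ord (alpha f ord_max) : alpha f ord_max <= ord_max))
       (theta f ord_max).

Definition lastD_weq (x y : NOb) (f : NHom x y) : Prop := is_id (lastD_hom f).

(* A functor Down_*(C) -> D, i.e. a functor on int N^{-,+}(C) which is
   constant on the equivalence classes of Down_equiv (the quotient). *)
Record DownFunctor (D : Category) := {
  DFo : NOb -> ob D;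
  DFh : forall x y, NHom x y -> hom (DFo x) (DFo y);
  DFh_resp : forall x y (f f' : NHom x y), Down_equiv f f' -> DFh f = DFh f';
  DFh_id : forall x, DFh (Nid x) = idm (DFo x);
  DFh_comp : forall x y z (g : NHom y z) (f : NHom x y),
      DFh (Ncomp g f) = hcomp (DFh g) (DFh f)
}.

End Down.

(* Main.v *)
Require Import Defs.
From mathcomp Require Import all_boot.
From Stdlib Require Import Relations ClassicalEpsilon.

Set Implicit Arguments.
Unset Strict Implicit.
Unset Printing Implicit Defensive.

Section Proof7.
Variables (C : Category) (R : Reedy C) (D : Category) (F : DownFunctor R D).

Lemma Xm_pi (x : NOb R) (i j : 'I_(len x).+1) (h1 h2 : i <= j) :
  Xm (n:=x) h1 = Xm (n:=x) h2.
Proof. by rewrite (bool_irrelevance h1 h2). Qed.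

Lemma c0_comp (c : ob C) : idm c = hcomp (idm c) (idm c).
Proof. by rewrite comp_id_l. Qed.

Definition c0 (c : ob C) : NOb R :=
  @Build_NOb C R 0 (fun _ => c) (fun _ _ _ => idm c) (fun _ _ => erefl)
    (fun _ _ _ _ _ _ => c0_comp c) (fun _ _ _ => Rm_id R c).

Definition constD (m n : nat) (k : 'I_n.+1) : Dmap m n :=
  @Build_Dmap m n (fun _ => k) (fun _ _ _ => leqnn k).

Lemma pt_nat (c : ob C) (y : NOb R) (k : 'I_(len y).+1) (th : hom c (Xo k))
  (i j : 'I_1) (h : i <= j) :
  hcomp th (idm c) = hcomp (Xm (n:=y) (dmono (constD 0 k) h)) th.
Proof. by rewrite Xm_id comp_id_l comp_id_r. Qed.

Definition pt (c : ob C) (y : NOb R) (k : 'I_(len y).+1) (th : hom c (Xo k))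
  (Hth : Rp R th) : NHom (c0 c) y :=
  @Build_NHom C R (c0 c) y (constD 0 k) (fun _ => th) (fun _ => Hth)
    (@pt_nat c y k th).

Definition iota (x : NOb R) : NHom (c0 (lastD x)) x :=
  @pt (lastD x) x ord_max (idm _) (Rp_id R _).

Definition xo1 (c z : ob C) (a : nat) : ob C := match a with 0 => c | _ => z end.
Definition chm1 (c z : ob C) (g : hom c z) (a b : nat) :
  a <= b -> hom (xo1 c z a) (xo1 c z b) :=
  match a as a0, b as b0 return a0 <= b0 -> hom (xo1 c z a0) (xo1 c z b0) with
  | 0, 0 => fun _ => idm c
  | 0, S _ => fun _ => g
  | S _, 0 => fun h => False_rect _ (Bool.diff_false_true h)
  | S _, S _ => fun _ => idm z
  end.

Section Chain1.
Variables (c z : ob C) (g : hom c z) (Hg : Rm R g).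

Lemma ch1_id (i : 'I_2) (h : i <= i) : chm1 g h = idm _.
Proof. by case: i h => [[|[|i]] Hi] h. Qed.

Lemma ch1_comp (i j k : 'I_2) (h1 : i <= j) (h2 : j <= k) (h3 : i <= k) :
  chm1 g h3 = hcomp (chm1 g h2) (chm1 g h1).
Proof.
case: i h1 h3 => [[|[|i]] Hi] //; case: j h2 => [[|[|j]] Hj] //;
  case: k => [[|[|k]] Hk] // h1 h2 h3 /=; by rewrite ?comp_id_l ?comp_id_r.
Qed.

Lemma ch1_minus (i j : 'I_2) (h : i <= j) : Rm R (chm1 g h).
Proof.
case: i h => [[|[|i]] Hi] //; case: j => [[|[|j]] Hj] // h /=;
  by [apply: Rm_id | ].
Qed.

Definition chain1 : NOb R :=
  @Build_NOb C R 1 (fun i => xo1 c z i) (fun i j h => chm1 g h) ch1_id ch1_comp ch1_minus.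

End Chain1.

Definition iinv (a b : ob D) (f : hom a b) (H : is_iso f) : hom b a :=
  proj1_sig (constructive_indefinite_description _ H).
Lemma iinv_l (a b : ob D) (f : hom a b) (H : is_iso f) : hcomp (iinv H) f = idm a.
Proof. by rewrite /iinv; case: constructive_indefinite_description => g [? ?]. Qed.
Lemma iinv_r (a b : ob D) (f : hom a b) (H : is_iso f) : hcomp f (iinv H) = idm b.
Proof. by rewrite /iinv; case: constructive_indefinite_description => g [? ?]. Qed.

Hypothesis Hinv : forall (x y : NOb R) (f : NHom x y), lastD_weq f -> is_iso (DFh F f).

Lemma iota_weq (x : NOb R) : lastD_weq (iota x).
Proof. exists erefl => /=. by rewrite /lastD_hom /= Xm_id comp_id_l. Qed.

Definition invi (x : NOb R) := iinv (Hinv (iota_weq x)).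
Definition Fi (x : NOb R) := DFh F (iota x).

Lemma Fi_cancel (x : NOb R) a (u v : hom a (DFo F (c0 (lastD x)))) :
  hcomp (Fi x) u = hcomp (Fi x) v -> u = v.
Proof.
move=> e; rewrite -(comp_id_l u) -(comp_id_l v) -(iinv_l (Hinv (iota_weq x))).
by rewrite -!comp_assoc; congr hcomp.
Qed.

Definition incl0 (c z : ob C) (g : hom c z) (Hg : Rm R g) : NHom (c0 c) (chain1 Hg) :=
  @pt c (chain1 Hg) ord0 (idm c) (Rp_id R c).

Definition Phi (c z d : ob C) (g : hom c z) (Hg : Rm R g) (h : hom z d) (Hh : Rp R h) :
  hom (DFo F (c0 c)) (DFo F (c0 d)) :=
  hcomp (DFh F (@pt z (c0 d) ord0 h Hh)) (hcomp (invi (chain1 Hg)) (DFh F (incl0 Hg))).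

Lemma DFh_le (x y : NOb R) (f f' : NHom x y) : Nle f f' -> DFh F f = DFh F f'.
Proof. by move=> H; apply: DFh_resp; apply: rst_step. Qed.

Section Q.
Variables (c z : ob C) (g : hom c z) (Hg : Rm R g) (y : NOb R) (k : 'I_(len y).+1)
  (th : hom c (Xo k)) (Hth : Rp R th) (h : hom z (lastD y)) (Hh : Rp R h)
  (e : hcomp h g = hcomp (Xm (n:=y) (leq_ord k : k <= ord_max)) th).

Definition qa_f (i : 'I_2) : 'I_(len y).+1 := match nat_of_ord i with 0 => k | _ => ord_max end.
Lemma qa_mono (i j : 'I_2) : i <= j -> qa_f i <= qa_f j.
Proof.
case: i => [[|[|i]] Hi] //; case: j => [[|[|j]] Hj] //= _; exact: leq_ord.
Qed.
Definition qa : Dmap 1 (len y) := Build_Dmap qa_mono.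

Definition thq (a : nat) : hom (xo1 c z a) (Xo (n:=y) (match a with 0 => k | _ => ord_max end)) :=
  match a with 0 => th | S _ => h end.

Lemma thq_plus (i : 'I_2) : Rp R (thq i).
Proof. by case: i => [[|[|i]] Hi]. Qed.

Lemma thq_nat (i j : 'I_2) (hij : i <= j) :
  hcomp (thq j) (Xm (n:=chain1 Hg) hij) = hcomp (Xm (n:=y) (dmono qa hij)) (thq i).
Proof.
move: hij; case: i => [[|[|i]] Hi] //; case: j => [[|[|j]] Hj] // hij /=;
  rewrite ?Xm_id ?comp_id_l ?comp_id_r //.
by rewrite e; apply: f_equal2 => //; apply: Xm_pi.
Qed.

Definition qmor : NHom (chain1 Hg) y := @Build_NHom C R (chain1 Hg) y qa (fun i => thq i) thq_plus thq_nat.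

Lemma qmor0 : DFh F (Ncomp qmor (incl0 Hg)) = DFh F (pt Hth).
Proof.
apply: DFh_le; exists (fun i => leqnn _) => i /=.
by rewrite /Ncomp_theta /= Xm_id comp_id_l comp_id_r.
Qed.

Lemma qmor1 : DFh F (Ncomp qmor (iota (chain1 Hg))) =
              DFh F (Ncomp (iota y) (@pt z (c0 (lastD y)) ord0 h Hh)).
Proof.
apply: DFh_le; exists (fun i => leqnn _) => i /=.
by rewrite /Ncomp_theta /= Xm_id !comp_id_l !comp_id_r.
Qed.

End Q.

Lemma Real (x y : NOb R) (f : NHom x y) (z : ob C) (g : hom (lastD x) z) (Hg : Rm R g)
  (h : hom z (lastD y)) (Hh : Rp R h) :
  hcomp h g = lastD_hom f ->
  hcomp (Fi y) (Phi Hg Hh) = hcomp (DFh F f) (Fi x).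
Proof.
move=> e.
have e' : hcomp h g = hcomp (Xm (n:=y) (leq_ord (alpha f ord_max) : alpha f ord_max <= ord_max)) (theta f ord_max) by [].
have H1 : hcomp (DFh F f) (Fi x) = DFh F (pt (theta_plus f ord_max)).
  rewrite /Fi -DFh_comp; apply: DFh_le; exists (fun i => leqnn _) => i /=.
  by rewrite /Ncomp_theta /= Xm_id comp_id_l comp_id_r.
rewrite H1 -(qmor0 Hg (theta_plus f ord_max) Hh e') DFh_comp.
rewrite /Phi /Fi comp_assoc -DFh_comp -(qmor1 Hg (theta_plus f ord_max) Hh e') DFh_comp.
rewrite -!comp_assoc; congr hcomp; rewrite comp_assoc.
have -> : hcomp (DFh F (iota (chain1 Hg))) (invi (chain1 Hg)) = idm _ by apply: iinv_r.
by rewrite comp_id_l.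
Qed.


Definition fact_sig (a b : ob C) (u : hom a b) :
  {z : ob C & {g : hom a z & {h : hom z b & (Rm R g * Rp R h * (hcomp h g = u))%type}}}.
Proof.
have [z Hz] := constructive_indefinite_description _ (R_fact R u).
have [g Hg] := constructive_indefinite_description _ Hz.
have [h [H1 [H2 H3]]] := constructive_indefinite_description _ Hg.
exact: (existT _ z (existT _ g (existT _ h (H1, H2, H3)))).
Defined.

Definition Fo (c : ob C) : ob D := DFo F (c0 c).
Definition Fh (a b : ob C) (u : hom a b) : hom (Fo a) (Fo b) :=
  match fact_sig u with
  | existT z (existT g (existT h (Hg, Hh, _))) => Phi Hg Hh
  end.

Lemma Fh_spec (a b : ob C) (u : hom a b) :
  exists z (g : hom a z) (h : hom z b) (Hg : Rm R g) (Hh : Rp R h),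
    hcomp h g = u /\ Fh u = Phi Hg Hh.
Proof.
rewrite /Fh; case: (fact_sig u) => z [g [h [[Hg Hh] e]]].
by exists z, g, h, Hg, Hh.
Qed.

Lemma FhReal (x y : NOb R) (f : NHom x y) (u : hom (lastD x) (lastD y)) :
  u = lastD_hom f -> hcomp (Fi y) (Fh u) = hcomp (DFh F f) (Fi x).
Proof.
move=> eu; have [z [g [h [Hg [Hh [e ->]]]]]] := Fh_spec u.
by apply: Real; rewrite e.
Qed.

Lemma FhR (x y : NOb R) (f : NHom x y) (u : hom (lastD x) (lastD y)) :
  u = lastD_hom f -> Fh u = hcomp (invi y) (hcomp (DFh F f) (Fi x)).
Proof.
move=> eu; apply: (@Fi_cancel y); rewrite (FhReal eu) !comp_assoc.
by rewrite /invi /Fi iinv_r comp_id_l.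
Qed.

Lemma Fh_id (c : ob C) : Fh (idm c) = idm (Fo c).
Proof.
rewrite (@FhR (c0 c) (c0 c) (Nid (c0 c))); last by rewrite /lastD_hom /= comp_id_l.
by rewrite DFh_id comp_id_l /invi iinv_l.
Qed.

Lemma comp_real (x y z : NOb R) (f1 : NHom x y) (f2 : NHom y z)
  (u1 : hom (lastD x) (lastD y)) (u2 : hom (lastD y) (lastD z)) (u3 : hom (lastD x) (lastD z)) :
  u1 = lastD_hom f1 -> u2 = lastD_hom f2 -> u3 = lastD_hom (Ncomp f2 f1) ->
  Fh u3 = hcomp (Fh u2) (Fh u1).
Proof.
move=> e1 e2 e3; rewrite (FhR e1) (FhR e2) (FhR e3) DFh_comp.
have H : hcomp (Fi y) (invi y) = idm _ by rewrite /invi /Fi iinv_r.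
rewrite -!comp_assoc [hcomp (Fi y) _]comp_assoc H comp_id_l.
by rewrite !comp_assoc.
Qed.

Lemma Fi_c0 (c : ob C) : Fi (c0 c) = idm (Fo c).
Proof.
rewrite /Fi -(DFh_id F (c0 c)); apply: DFh_le.
exists (fun i => leq0n i) => i /=; by rewrite comp_id_l.
Qed.

Lemma invi_c0 (c : ob C) : invi (c0 c) = idm (Fo c).
Proof.
have := iinv_l (Hinv (iota_weq (c0 c))).
by rewrite -/(invi (c0 c)) -/(Fi (c0 c)) Fi_c0 comp_id_r.
Qed.

Lemma Fh_plus (c d : ob C) (p : hom c d) (Hp : Rp R p) :
  Fh p = DFh F (@pt c (c0 d) ord0 p Hp).
Proof.
rewrite (@FhR (c0 c) (c0 d) (@pt c (c0 d) ord0 p Hp)); last by rewrite /lastD_hom /= comp_id_l.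
by rewrite invi_c0 Fi_c0 comp_id_l comp_id_r.
Qed.

Lemma Fh_minus (c z : ob C) (g : hom c z) (Hg : Rm R g) :
  Fh g = hcomp (invi (chain1 Hg)) (DFh F (incl0 Hg)).
Proof.
rewrite (@FhR (c0 c) (chain1 Hg) (incl0 Hg)); last by rewrite /lastD_hom /= comp_id_r.
by rewrite Fi_c0 comp_id_r.
Qed.

Lemma PhiFact (c z d : ob C) (g : hom c z) (Hg : Rm R g) (h : hom z d) (Hh : Rp R h) :
  Phi Hg Hh = hcomp (Fh h) (Fh g).
Proof. by rewrite (Fh_plus Hh) (Fh_minus Hg). Qed.

Lemma Fact (a b : ob C) (u : hom a b) (z : ob C) (g : hom a z) (h : hom z b) :
  Rm R g -> Rp R h -> hcomp h g = u -> Fh u = hcomp (Fh h) (Fh g).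
Proof.
move=> Hg Hh e.
have [z' [g' [h' [Hg' [Hh' [e' ->]]]]]] := Fh_spec u.
rewrite PhiFact.
have U := R_fact_uniq Hg' Hh' e' Hg Hh e.
pose G (s : {w : ob C & (hom a w * hom w b)%type}) :=
  hcomp (Fh (projT2 s).2) (Fh (projT2 s).1).
exact: (f_equal G U).
Qed.

Lemma Fh_pp (c z e : ob C) (p1 : hom c z) (p2 : hom z e) (H1 : Rp R p1) (H2 : Rp R p2) :
  Fh (hcomp p2 p1) = hcomp (Fh p2) (Fh p1).
Proof.
apply: (@comp_real _ _ _ (@pt c (c0 z) ord0 p1 H1) (@pt z (c0 e) ord0 p2 H2));
  by rewrite /lastD_hom /= ?comp_id_l.
Qed.

Lemma Fh_mp (c z e : ob C) (p : hom c z) (g : hom z e) (Hp : Rp R p) (Hg : Rm R g) :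
  Fh (hcomp g p) = hcomp (Fh g) (Fh p).
Proof.
apply: (@comp_real _ _ _ (@pt c (c0 z) ord0 p Hp) (incl0 Hg));
  by rewrite /lastD_hom /= /Ncomp_theta /= ?comp_id_l ?comp_id_r.
Qed.


Section Chain2.
Variables (c z e : ob C) (g : hom c z) (m : hom z e) (Hg : Rm R g) (Hm : Rm R m).

Definition xo2 (a : nat) : ob C := match a with 0 => c | 1 => z | _ => e end.
Definition chm2 (a b : nat) : a <= b -> hom (xo2 a) (xo2 b) :=
  match a as a0, b as b0 return a0 <= b0 -> hom (xo2 a0) (xo2 b0) with
  | 0, 0 => fun _ => idm c
  | 0, 1 => fun _ => g
  | 0, S (S _) => fun _ => hcomp m g
  | 1, 1 => fun _ => idm z
  | 1, S (S _) => fun _ => m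
  | S (S _), S (S _) => fun _ => idm e
  | _, _ => fun h => False_rect _ (Bool.diff_false_true h)
  end.

Lemma ch2_id (i : 'I_3) (h : i <= i) : chm2 h = idm _.
Proof. by case: i h => [[|[|[|i]]] Hi] h. Qed.

Lemma ch2_comp (i j k : 'I_3) (h1 : i <= j) (h2 : j <= k) (h3 : i <= k) :
  chm2 h3 = hcomp (chm2 h2) (chm2 h1).
Proof.
case: i h1 h3 => [[|[|[|i]]] Hi] //; case: j h2 => [[|[|[|j]]] Hj] //;
  case: k => [[|[|[|k]]] Hk] // h1 h2 h3 /=; by rewrite ?comp_id_l ?comp_id_r.
Qed.

Lemma ch2_minus (i j : 'I_3) (h : i <= j) : Rm R (chm2 h).
Proof.
case: i h => [[|[|[|i]]] Hi] //; case: j => [[|[|[|j]]] Hj] // h /=;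
  by [apply: Rm_id | apply: Rm_comp | ].
Qed.

Definition chain2 : NOb R :=
  @Build_NOb C R 2 (fun i => xo2 i) (fun i j h => chm2 h) ch2_id ch2_comp ch2_minus.

Definition wmap : Dmap 1 2 :=
  @Build_Dmap 1 2 (fun i => widen_ord (leqnSn 2) i) (fun _ _ h => h).

Definition thw (a : nat) : hom (xo1 c z a) (xo2 a) :=
  match a with 0 => idm c | 1 => idm z | _ => m end.

Lemma thw_plus (i : 'I_2) : Rp R (thw i).
Proof. by case: i => [[|[|i]] Hi] //=; apply: Rp_id. Qed.

Lemma thw_nat (i j : 'I_2) (hij : i <= j) :
  hcomp (thw j) (Xm (n:=chain1 Hg) hij) = hcomp (Xm (n:=chain2) (dmono wmap hij)) (thw i).
Proof.
move: hij; case: i => [[|[|i]] Hi] //; case: j => [[|[|j]] Hj] // hij /=;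
  by rewrite ?comp_id_l ?comp_id_r.
Qed.

Definition wmor : NHom (chain1 Hg) chain2 :=
  @Build_NHom C R (chain1 Hg) chain2 wmap (fun i => thw i) thw_plus thw_nat.

End Chain2.

Lemma Fh_mm (c z e : ob C) (g : hom c z) (m : hom z e) (Hg : Rm R g) (Hm : Rm R m) :
  Fh (hcomp m g) = hcomp (Fh m) (Fh g).
Proof.
apply: (@comp_real _ _ _ (incl0 Hg) (wmor Hg Hm));
  by rewrite /lastD_hom /= /Ncomp_theta /= ?comp_id_l ?comp_id_r.
Qed.

Lemma Fh_comp (a b c : ob C) (v : hom b c) (u : hom a b) :
  Fh (hcomp v u) = hcomp (Fh v) (Fh u).
Proof.
have [z1 [g1 [h1 [Hg1 [Hh1 e1]]]]] := R_fact R u.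
have [z2 [g2 [h2 [Hg2 [Hh2 e2]]]]] := R_fact R v.
have [z3 [m [p [Hm [Hp e3]]]]] := R_fact R (hcomp g2 h1).
have E : hcomp (hcomp h2 p) (hcomp m g1) = hcomp v u.
  by rewrite -e1 -e2 -!comp_assoc [hcomp p (hcomp m g1)]comp_assoc e3 -!comp_assoc.
rewrite -E (Fact (Rm_comp Hg1 Hm) (Rp_comp Hp Hh2) erefl).
rewrite (Fh_pp Hp Hh2) (Fh_mm Hg1 Hm).
rewrite (Fact Hg1 Hh1 e1) (Fact Hg2 Hh2 e2).
have E2 : hcomp (Fh g2) (Fh h1) = hcomp (Fh p) (Fh m).
  by rewrite -(Fh_mp Hh1 Hg2) (Fact Hm Hp e3).
by rewrite -!comp_assoc [hcomp (Fh g2) (hcomp (Fh h1) _)]comp_assoc E2 -!comp_assoc.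
Qed.

Definition Ft : Functor C D :=
  @Build_Functor C D Fo (fun a b u => Fh u) Fh_id Fh_comp.

Lemma main_sec :
  exists (Ft : Functor C D)
         (eta : forall x : NOb R, hom (fob Ft (lastD x)) (DFo F x)),
    (forall x : NOb R, is_iso (eta x)) /\
    (forall (x y : NOb R) (f : NHom x y),
        hcomp (eta y) (fhom Ft (lastD_hom f)) = hcomp (DFh F f) (eta x)).
Proof.
exists Ft, Fi; split; first by move=> x; apply: Hinv; apply: iota_weq.
by move=> x y f; apply: FhReal.
Qed.

End Proof7.

Theorem proposition7p10 (C : Category) (R : Reedy C) (D : Category)
  (F : DownFunctor R D) :
  (forall (x y : NOb R) (f : NHom x y), lastD_weq f -> is_iso (DFh F f)) ->
  exists (Ft : Functor C D)
         (eta : forall x : NOb R, hom (fob Ft (lastD x)) (DFo F x)),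
    (forall x : NOb R, is_iso (eta x)) /\
    (forall (x y : NOb R) (f : NHom x y),
        hcomp (eta y) (fhom Ft (lastD_hom f)) = hcomp (DFh F f) (eta x)).
Proof. move=> H; exact: main_sec H. Qed.
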